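(* Let $H \in \mathbb{Z}^{k \times n}$, $b^\star \in \mathbb{R}^k$ and $b \in \mathbb{Z}^k$, and suppose there exists $x^\star \in [0,1]^n$ with $Hx^\star = b^\star$ such that $x^\star$ has at most $\varphi$ fractional entries (entries not in $\{0,1\}$), where $\varphi$ is a nonnegative integer. If the system $Hz = b$, $z \in \{0,1\}^n$ has a solution, then there exists a solution $\hat{z} \in \{0,1\}^n$ of $H\hat z = b$ with \[ \|x^\star - \hat{z}\|_1 \leq \left( \left\lceil \frac{\|b^\star - b\|_\infty}{\|H\|_\infty} \right\rceil + \varphi + 1 \right) (2k \|H\|_\infty + 1)^k. \]
   Context: For a matrix $H$, $\|H\|_\infty$ denotes the maximum absolute value of an entry of $H$; for vectors, $\|\cdot\|_1$ and $\|\cdot\|_\infty$ are the usual $\ell_1$- and $\ell_\infty$-norms. *)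

(* Defs.v *)
From mathcomp Require Import all_boot all_order all_algebra.
Set Implicit Arguments. Unset Strict Implicit. Unset Printing Implicit Defensive.
Import Order.TTheory GRing.Theory Num.Theory.
Local Open Scope ring_scope.

(* ||H||_inf : maximum absolute value of an entry of an integer matrix (as a nat). *)
Definition mx_entry_max (k n : nat) (H : 'M[int]_(k, n)) : nat :=
  (\max_(i < k) \max_(j < n) `|H i j|%N)%N.

Definition vnorm_inf (R : realFieldType) (k : nat) (v : 'cV[R]_k) : R :=
  \big[Num.max/0]_(i < k) `|v i 0|.

Definition vnorm_1 (R : realFieldType) (n : nat) (v : 'cV[R]_n) : R :=
  \sum_(i < n) `|v i 0|.

Definition is_binary (n : nat) (z : 'cV[int]_n) : Prop :=
  forall i, z i 0 = 0 \/ z i 0 = 1.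

(* Main.v *)
Require Import Defs.
From mathcomp Require Import all_boot all_order all_algebra.
Import Order.TTheory GRing.Theory Num.Theory.
Local Open Scope ring_scope.
From mathcomp Require Import lra.
Set Implicit Arguments. Unset Strict Implicit. Unset Printing Implicit Defensive.

Lemma kernel_exists (R : fieldType) (I : finType) (k : nat) (v : I -> 'I_k -> R)
  (Fr : {set I}) : (k.+1 < #|Fr|)%N ->
  exists w : I -> R, (forall i, i \notin Fr -> w i = 0) /\ (exists i, w i != 0) /\
    (forall l, \sum_(i in Fr) w i * v i l = 0) /\ \sum_(i in Fr) w i = 0.
Proof.
move=> hF.
have [i0 Hi0] : exists i0, i0 \in Fr.
  by apply/set0Pn; rewrite -card_gt0 (leq_ltn_trans _ hF).
pose M : 'M[R]_(#|Fr|, k + 1) :=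
  row_mx (\matrix_(r, l) v (enum_val r) l) (const_mx 1).
have hK : kermx M != 0.
  rewrite kermx_eq0 /row_free; apply/negP=> /eqP h.
  have := rank_leq_col M; rewrite h addn1 => h2.
  by move: (leq_trans hF h2); rewrite ltnn.
have [r0 hr0] : exists r0, row r0 (kermx M) != 0.
  apply/existsP; apply: contraNT hK => /existsPn h; apply/eqP/row_matrixP=> r.
  by rewrite row0; apply/eqP; move: (h r); rewrite negbK.
set u := row r0 (kermx M) in hr0.
have hu : u *m M = 0 by apply/sub_kermxP; exact: row_sub.
move: hu; rewrite mul_mx_row -row_mx0 => /eq_row_mx [hu1 hu2].
pose w i := if i \in Fr then u 0 (enum_rank_in Hi0 i) else 0.
have hw r : w (enum_val r) = u 0 r.
  by rewrite /w (enum_valP r) enum_valK_in.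
exists w; split; first by move=> i /negbTE hi; rewrite /w hi.
split.
  have [j hj] : exists j, u 0 j != 0.
    apply/existsP; apply: contraNT hr0 => /existsPn h; apply/eqP/rowP=> j.
    by move: (h j); rewrite negbK => /eqP ->; rewrite mxE.
  by exists (enum_val j); rewrite hw.
split.
  move=> l; rewrite big_enum_val.
  have := congr1 (fun A : 'M[R]_(1,k) => A 0 l) hu1; rewrite !mxE => h; apply: etrans h.
  by apply: eq_bigr => r _; rewrite hw !mxE.
rewrite big_enum_val.
have := congr1 (fun A : 'M[R]_(1,1) => A 0 0) hu2; rewrite !mxE => h; apply: etrans h.
by apply: eq_bigr => r _; rewrite hw !mxE mulr1.
Qed.


Lemma sum_supp (R : realFieldType) (I : finType) (A B : {set I}) (g : I -> R) :
  B \subset A -> (forall i, i \notin B -> g i = 0) ->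
  \sum_(i in A) g i = \sum_(i in B) g i.
Proof.
move=> sBA h0; rewrite (big_setID B) /= [X in _ + X]big1 ?addr0.
  by rewrite (setIidPr sBA).
by move=> i; rewrite inE => /andP [] /h0.
Qed.

Lemma reduce (R : realFieldType) (I : finType) (k : nat) (v : I -> 'I_k -> R)
  (A : {set I}) : forall N (mu : I -> R),
  (#|[set i in A | (0 < mu i < 1)%R]| <= N)%N -> (forall i, i \in A -> 0 <= mu i <= 1) ->
  exists mu' : I -> R, (forall i, i \in A -> 0 <= mu' i <= 1) /\
   (forall l, \sum_(i in A) mu' i * v i l = \sum_(i in A) mu i * v i l) /\
   \sum_(i in A) mu' i = \sum_(i in A) mu i /\
   (#|[set i in A | (0 < mu' i < 1)%R]| <= k.+1)%N.
Proof.
elim=> [|N IH] mu hN h01.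
  by exists mu; split=> //; split=> //; split=> //; apply: leq_trans hN _.
set Fr := [set i in A | (0 < mu i < 1)%R] in hN *.
case: (leqP #|Fr| k.+1) => hk; first by exists mu.
have [w [w0 [[j hj] [wv ws]]]] := kernel_exists v hk.
have hFr i : i \in Fr -> (i \in A) /\ 0 < mu i < 1 by rewrite inE => /andP.
have hjS : j \in [set i in Fr | w i != 0].
  rewrite inE hj andbT; apply: contraNT hj => /w0 ->; by [].
pose ratio i := if 0 < w i then (1 - mu i) / w i else mu i / (- w i).
have ratio_pos i : i \in [set i in Fr | w i != 0] -> 0 < ratio i.
  rewrite inE => /andP [/hFr [_ /andP [h1 h2]] hw].
  rewrite /ratio; case: ifP => hw0.
    by apply: divr_gt0 => //; rewrite subr_gt0.
  apply: divr_gt0 => //; rewrite oppr_gt0; rewrite lt_neqAle hw /=.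
  by rewrite leNgt hw0.
case: (arg_minP ratio hjS) => i0 hi0 hmin.
have /andP [hi0F hi0w] : (i0 \in Fr) && (w i0 != 0) by have hi0' : i0 \in [set i in Fr | w i != 0] := hi0; move: hi0'; rewrite inE.
set eps := ratio i0.
have eps_gt0 : 0 < eps by apply: ratio_pos.
pose mu' i := mu i + eps * w i.
have hS i : w i != 0 -> i \in [set i in Fr | w i != 0].
  move=> hw; rewrite inE hw andbT; apply: contraNT hw => /w0 ->; by [].
have hrw i : w i != 0 -> ratio i * w i = if 0 < w i then 1 - mu i else - mu i.
  move=> hw; rewrite /ratio; case: ifP => _; first by rewrite divfK.
  by rewrite invrN mulrN mulNr divfK.
have h01' : forall i, i \in A -> 0 <= mu' i <= 1.
  move=> i hiA; rewrite /mu'.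
  have [hw|hw] := eqVneq (w i) 0; first by rewrite hw mulr0 addr0 h01.
  have hle : eps <= ratio i := hmin i (hS i hw).
  have e := hrw i hw.
  have /andP [m0 m1] := h01 i hiA.
  case: (ltP 0 (w i)) => hw0 in e *.
    have : eps * w i <= ratio i * w i by rewrite ler_wpM2r // ltW.
    have : 0 <= eps * w i by rewrite mulr_ge0 // ltW.
    rewrite e; move=> *; apply/andP; split; lra.
  have : ratio i * w i <= eps * w i by rewrite ler_wnM2r.
  have : eps * w i <= 0 by rewrite pmulr_rle0.
  rewrite e; move=> *; apply/andP; split; lra.
have hv l : \sum_(i in A) mu' i * v i l = \sum_(i in A) mu i * v i l.
  rewrite /mu'; under eq_bigr do rewrite mulrDl.
  rewrite big_split /= -[RHS]addr0; congr (_ + _).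
  under eq_bigr do rewrite -mulrA.
  rewrite -mulr_sumr (@sum_supp _ _ _ Fr); first by rewrite wv mulr0.
    by apply/subsetP=> i /hFr [].
  by move=> i /w0 ->; rewrite mul0r.
have hs : \sum_(i in A) mu' i = \sum_(i in A) mu i.
  rewrite /mu' big_split /= -[RHS]addr0; congr (_ + _).
  rewrite -mulr_sumr (@sum_supp _ _ _ Fr); first by rewrite ws mulr0.
    by apply/subsetP=> i /hFr [].
  by move=> i /w0 ->.
have hN' : (#|[set i in A | (0 < mu' i < 1)%R]| <= N)%N.
  have sub : [set i in A | (0 < mu' i < 1)%R] \subset Fr :\ i0.
    apply/subsetP=> i; rewrite !inE => /andP [hiA hfr].
    have [hw|hw] := eqVneq (w i) 0.
      move: hfr; rewrite /mu' hw mulr0 addr0 => ->; rewrite hiA andbT.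
      rewrite andbT; apply/eqP => e; move: hi0w; by rewrite -e hw eqxx.
    have : i \in [set i in Fr | w i != 0] by apply: hS.
    rewrite inE => /andP [hF _]; have [hA hm] := hFr i hF; rewrite hA hm !andbT.
    apply: contraTneq hfr => e; rewrite e /mu' /eps hrw //.
    case: ifP => _; first by rewrite addrC subrK ltxx andbF.
    by rewrite subrr ltxx.
  apply: leq_trans (subset_leq_card sub) _.
  move: hN; rewrite (cardsD1 i0 Fr).
  by rewrite hi0F.
have [mu'' [h1 [h2 [h3 h4]]]] := IH mu' hN' h01'.
exists mu''; split=> //; split; first by move=> l; rewrite h2 hv.
by split=> //; rewrite h3 hs.
Qed.


Lemma zero_exists (R : realFieldType) (I : finType) (k m : nat) (A : {set I}) (mu : I -> R) :
  #|A| = (m.+1 + k)%N -> (forall i, i \in A -> 0 <= mu i <= 1) ->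
  (#|[set i in A | (0 < mu i < 1)%R]| <= k.+1)%N -> \sum_(i in A) mu i = m%:R ->
  exists2 i, i \in A & mu i = 0.
Proof.
move=> hA h01 hf hs.
case: (boolP [exists i in A, mu i == 0]) => [/exists_inP [i hi /eqP h]|hn].
  by exists i.
have hpos i : i \in A -> 0 < mu i.
  move=> hi; have /andP [h0 _] := h01 i hi; rewrite lt_neqAle h0 andbT eq_sym.
  by apply: contraNneq hn => e; apply/exists_inP; exists i; rewrite ?e.
set Fr := [set i in A | (0 < mu i < 1)%R] in hf.
pose g i := mu i - (1 - (i \in Fr)%:R).
have hFrA : Fr \subset A by apply/subsetP=> i; rewrite inE => /andP [].
have g0 i : i \in A -> 0 <= g i.
  move=> hi; rewrite /g; have hp := hpos i hi; have /andP [_ h1] := h01 i hi.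
  have [hh|hh] := boolP (i \in Fr); first by rewrite /= mulr1n subrr subr0 ltW.
  have e : mu i = 1.
    apply/eqP; rewrite eq_le h1 /= leNgt; apply: contra hh => hl.
    by rewrite inE hi hp hl.
  by rewrite /= mulr0n subr0 e subrr.
have sFr : \sum_(i in A) (i \in Fr)%:R = (#|Fr|%:R : R).
  rewrite (@sum_supp _ _ A Fr) //; last by move=> i /negbTE ->.
  rewrite (eq_bigr (fun _ => 1)); last by move=> i ->.
  by rewrite sumr_const.
have sg : \sum_(i in A) g i = #|Fr|%:R - k%:R - 1.
  rewrite /g big_split /= sumrN big_split /= sumrN sFr hs sumr_const hA.
  rewrite !natrD; lra.
have hgle : \sum_(i in A) g i <= 0.
  rewrite sg; move: hf; rewrite -(ler_nat R) -addn1 natrD; lra.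
have hge : 0 <= \sum_(i in A) g i by apply: sumr_ge0.
have hall : forall i, i \in A -> g i = 0.
  by apply: psumr_eq0P; [exact: g0 | apply/eqP; rewrite eq_le hgle hge].
have hfk : #|Fr| = k.+1.
  apply/eqP; rewrite eqn_leq hf /=; rewrite -(ler_nat R) -addn1 natrD.
  have : \sum_(i in A) g i = 0 by rewrite big1.
  rewrite sg; lra.
have [i hi] : exists i, i \in Fr by apply/set0Pn; rewrite -card_gt0 hfk.
have := hall i (subsetP hFrA _ hi); rewrite /g hi /= mulr1n subrr subr0.
by move: hi; rewrite inE => /andP [_ /andP [h0 _]] e; move: h0; rewrite e ltxx.
Qed.


Lemma sum_seq_bound (R : realFieldType) (I : Type) (k : nat) (v : I -> 'I_k -> R) (D : R)
  (hD : forall i l, `|v i l| <= D) (t : seq I) l :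
  `|\sum_(i <- t) v i l| <= (size t)%:R * D.
Proof.
elim: t => [|x t IH]; first by rewrite big_nil normr0 mul0r.
rewrite big_cons /= -addn1 natrD mulrDl mul1r addrC.
by apply: le_trans (ler_normD _ _) _; apply: lerD.
Qed.

Lemma steinitz (R : realFieldType) (I : finType) (k : nat) (v : I -> 'I_k -> R) (D : R)
  (hD0 : 0 <= D) (hD : forall i l, `|v i l| <= D) :
  forall m (A : {set I}) (lam : I -> R), #|A| = (m + k)%N ->
  (forall i, i \in A -> 0 <= lam i <= 1) ->
  (forall l, \sum_(i in A) lam i * v i l = 0) -> \sum_(i in A) lam i = m%:R ->
  exists s : seq I, [/\ uniq s, s =i A &
     forall j l, `|\sum_(i <- take j s) v i l| <= k%:R * D].
Proof.
elim=> [|m IH] A lam hA h01 hv hs.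
  exists (enum A); split; [exact: enum_uniq | by move=> x; rewrite mem_enum |].
  move=> j l; apply: le_trans (sum_seq_bound hD _ _) _.
  have hsz : size (enum A) = k by rewrite -cardE hA.
  apply: ler_wpM2r => //; rewrite ler_nat size_take hsz.
  by case: ifP => // /ltnW.
pose mu i := lam i * (m%:R / m.+1%:R).
have hm : 0 <= (m%:R / m.+1%:R : R) <= 1.
  apply/andP; split; first by apply: divr_ge0.
  by rewrite ler_pdivrMr ?mul1r ?ler_nat // ltr0Sn.
have hmu01 i : i \in A -> 0 <= mu i <= 1.
  move=> hi; have /andP [l0 l1] := h01 i hi; move/andP: hm => [m0 m1].
  apply/andP; split; first by apply: mulr_ge0.
  by rewrite -(mulr1 1); apply: ler_pM.
have [mu' [h01' [hv' [hs' hf']]]] := reduce v (leqnn _) hmu01.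
have hmuv l : \sum_(i in A) mu' i * v i l = 0.
  rewrite hv' /mu'; under eq_bigr do rewrite mulrAC.
  by rewrite -mulr_suml hv mul0r.
have hmus : \sum_(i in A) mu' i = m%:R.
  rewrite hs' /mu -mulr_suml hs mulrA mulrC mulrA.
  by rewrite mulVf ?mul1r // pnatr_eq0.
have [i0 hi0 hz] := zero_exists hA h01' hf' hmus.
pose A' := A :\ i0.
have hA' : #|A'| = (m + k)%N.
  by move: hA; rewrite (cardsD1 i0 A) hi0 add1n addSn => [[]].
have hsub i : i \in A' -> i \in A by rewrite inE => /andP [].
have hv2 l : \sum_(i in A') mu' i * v i l = 0.
  by rewrite -[RHS](hmuv l) (big_setD1 i0 hi0) /= hz mul0r add0r.
have hs2 : \sum_(i in A') mu' i = m%:R.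
  by rewrite -[RHS]hmus (big_setD1 i0 hi0) /= hz add0r.
have [s' [us' ms' bs']] := IH A' mu' hA' (fun i hi => h01' i (hsub i hi)) hv2 hs2.
have hi0s : i0 \notin s' by rewrite ms' !inE eqxx.
have hsA l : \sum_(i <- rcons s' i0) v i l = \sum_(i in A) v i l.
  rewrite big_uniq /=; last by rewrite rcons_uniq hi0s us'.
  apply: eq_bigl => x; rewrite mem_rcons in_cons ms' !inE.
  by case: (x =P i0) => [->|_] /=; rewrite ?hi0.
have hfull l : `|\sum_(i in A) v i l| <= k%:R * D.
  have -> : \sum_(i in A) v i l = \sum_(i in A) (1 - lam i) * v i l.
    under [RHS]eq_bigr do rewrite mulrBl mul1r.
    by rewrite sumrB hv subr0.
  apply: le_trans (ler_norm_sum _ _ _) _.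
  apply: (@le_trans _ _ (\sum_(i in A) (1 - lam i) * D)).
    apply: ler_sum => i hi; rewrite normrM.
    have /andP [_ l1] := h01 i hi.
    rewrite ger0_norm ?subr_ge0 //; apply: ler_wpM2l; rewrite ?subr_ge0 //.
  rewrite -mulr_suml sumrB hs sumr_const hA natrD.
  rewrite -addn1 natrD; apply: ler_wpM2r => //; lra.
exists (rcons s' i0); split.
- by rewrite rcons_uniq hi0s us'.
- by move=> x; rewrite mem_rcons in_cons ms' !inE; case: (x =P i0) => [->|_] /=; rewrite ?hi0.
move=> j l; rewrite -cats1 take_cat.
case: ifP => hj; first exact: bs'.
case: (j - size s')%N => [|j'].
  by rewrite take0 cats0 -(take_size s'); apply: bs'.
by rewrite /= cats1 hsA.
Qed.


Lemma steinitz0 (R : realFieldType) (I : finType) (k : nat) (v : I -> 'I_k -> R) (D : R)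
  (hD0 : 0 <= D) (hD : forall i l, `|v i l| <= D) (A : {set I}) :
  (forall l, \sum_(i in A) v i l = 0) ->
  exists s : seq I, [/\ uniq s, s =i A &
     forall j l, `|\sum_(i <- take j s) v i l| <= k%:R * D].
Proof.
move=> hv.
case: (leqP #|A| k) => hk.
  exists (enum A); split; [exact: enum_uniq | by move=> x; rewrite mem_enum |].
  have hsz : (size (enum A) <= k)%N by rewrite -cardE.
  move=> j l; apply: le_trans (sum_seq_bound hD _ _) _.
  apply: ler_wpM2r => //; rewrite ler_nat size_take.
  by case: ifP => // /ltnW h; apply: leq_trans h hsz.
have hA : #|A| = ((#|A| - k) + k)%N by rewrite subnK // ltnW.
have hA0 : (0 < #|A|)%N by apply: leq_ltn_trans hk.
pose c : R := (#|A| - k)%:R / #|A|%:R.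
apply: (@steinitz R I k v D hD0 hD (#|A| - k) A (fun _ => c) hA).
- move=> i _; apply/andP; split; first by apply: divr_ge0.
  by rewrite ler_pdivrMr ?ltr0n // mul1r ler_nat leq_subr.
- by move=> l; rewrite -mulr_sumr hv mulr0.
by rewrite sumr_const /c -[LHS]mulr_natr divfK // pnatr_eq0 -lt0n.
Qed.

Lemma filter_take (T : Type) (p : pred T) (s : seq T) j :
  filter p (take j s) = take (count p (take j s)) (filter p s).
Proof.
elim: s j => [|x s IH] [|j] //=; first by rewrite take0.
by case: ifP => hp /=; rewrite IH.
Qed.

Lemma count_take_le (T : Type) (p : pred T) (s : seq T) j :
  (count p (take j s) <= count p s)%N.
Proof. by rewrite -{2}(cat_take_drop j s) count_cat leq_addr. Qed.


Definition xr (R : realFieldType) n (xstar : 'cV[R]_n) (i : 'I_n) : int :=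
  if xstar i 0 == 1 then 1 else 0.
Definition Frs (R : realFieldType) n (xstar : 'cV[R]_n) : {set 'I_n} :=
  [set i | (xstar i ord0 != 0%R) && (xstar i ord0 != 1%R)].
Definition Tset (R : realFieldType) n (xstar : 'cV[R]_n) (z : 'cV[int]_n) : {set 'I_n} :=
  [set i | (i \notin Frs xstar) && (z i 0 != xr xstar i)].

Lemma xr_eq (R : realFieldType) n (xstar : 'cV[R]_n) i :
  (0 <= xstar i 0 <= 1) -> i \notin Frs xstar -> xstar i 0 = (xr xstar i)%:~R.
Proof.
move=> _; rewrite /Frs /xr inE negb_and !negbK.
case/orP => /eqP ->; last by rewrite eqxx.
by rewrite eq_sym oner_eq0.
Qed.

Lemma intr_sum (R : pzRingType) (I : Type) (r : seq I) (P : pred I) (F : I -> int) :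
  (\sum_(i <- r | P i) F i)%:~R = \sum_(i <- r | P i) (F i)%:~R :> R.
Proof. by elim/big_rec2: _ => // i x y _ h; rewrite intrD h. Qed.

Lemma entry_bound k n (H : 'M[int]_(k, n)) l i : (`|H l i| <= mx_entry_max H)%N.
Proof.
rewrite /mx_entry_max; apply: (leq_trans _ (leq_bigmax l)).
exact: (@leq_bigmax _ (fun j => `|H l j|%N) i).
Qed.

Lemma step (R : archiRealFieldType) (k n : nat) (H : 'M[int]_(k, n)) (bstar : 'cV[R]_k)
  (b : 'cV[int]_k) (xstar : 'cV[R]_n) (cn : nat)
  (hx01 : forall i, 0 <= xstar i 0 <= 1)
  (hHx : map_mx intr H *m xstar = bstar)
  (hcn : forall l, `|bstar l 0 - (b l 0)%:~R| <= cn%:R * (mx_entry_max H)%:R)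
  (z : 'cV[int]_n) (hz : is_binary z) (hzb : H *m z = b) :
  (exists2 z' : 'cV[int]_n, is_binary z' /\ H *m z' = b & Tset xstar z' \proper Tset xstar z) \/
  vnorm_1 (xstar - map_mx intr z) <=
    ((cn + #|Frs xstar|).+1 * (2 * k * mx_entry_max H + 1) ^ k)%N%:R.
Proof.
set Δ := mx_entry_max H.
set D : R := Δ%:R.
set Fr := Frs xstar.
have hD0 : 0 <= D by rewrite ler0n.
have hH l i : `|(H l i)%:~R| <= D :> R.
  by rewrite -intr_norm -natr_absz ler_nat entry_bound.
have hz01 i : 0 <= ((z i 0)%:~R : R) <= 1.
  by case: (hz i) => ->; rewrite ?ler01 ?lexx.
pose I := ('I_n + 'I_cn)%type.
pose v (x : I) (l : 'I_k) : R := match x with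
  | inl i => ((z i 0)%:~R - xstar i 0) * (H l i)%:~R
  | inr _ => (bstar l 0 - (b l 0)%:~R) / cn%:R end.
pose A : {set I} := [set x | match x with
  | inl i => (i \in Fr) || (z i 0 != xr xstar i) | inr _ => true end].
have hvD x l : `|v x l| <= D.
  case: x => [i|j] /=.
    rewrite normrM -[D]mul1r; apply: ler_pM => //.
    have := hz01 i; have := hx01 i; move=> /andP [h1 h2] /andP [h3 h4].
    rewrite ler_norml; apply/andP; split; lra.
  have hc : (0 < cn)%N by apply: leq_ltn_trans (ltn_ord j).
  rewrite normrM normfV normr_nat ler_pdivrMr ?ltr0n // mulrC.
  exact: hcn.
have hsum l : \sum_(x in A) v x l = 0.
  rewrite big_sumType /=.
  have -> : \sum_(i | inl i \in A) v (inl i) l = (b l 0)%:~R - bstar l 0.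
    rewrite big_mkcond /=.
    rewrite (eq_bigr (fun i => ((z i 0)%:~R - xstar i 0) * (H l i)%:~R)); last first.
      move=> i _; rewrite inE; case: ifP => // /negbT.
      rewrite negb_or negbK => /andP [hF /eqP e].
      by rewrite (xr_eq (hx01 i) hF) e subrr mul0r.
    rewrite -hzb -hHx !mxE intr_sum; under eq_bigr do rewrite mulrBl.
    rewrite sumrB; congr (_ - _); by apply: eq_bigr => i _; rewrite ?mxE ?intrM mulrC.
  have -> : \sum_(j | inr j \in A) v (inr j) l = bstar l 0 - (b l 0)%:~R.
    rewrite (eq_bigl predT) /=; last by move=> j; rewrite inE.
    rewrite sumr_const card_ord.
    case: (posnP cn) => hc.
      have := hcn l; rewrite hc mul0r normr_le0 => /eqP ->; by rewrite mulr0n.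
    by rewrite -[LHS]mulr_natr divfK // pnatr_eq0 -lt0n.
  by rewrite addrA subrK subrr.
have [s [us ms hs]] := steinitz0 hD0 hvD hsum.
pose piece (x : I) : bool := match x with inl i => i \in Fr | inr _ => true end.
pose vint (x : I) (l : 'I_k) : int := match x with
  | inl i => (z i 0 - xr xstar i) * H l i | inr _ => 0 end.
have hvint x l : ~~ piece x -> v x l = (vint x l)%:~R.
  case: x => [i|j] //= hF.
  by rewrite (xr_eq (hx01 i) hF) intrM intrB.
pose cnt j := count piece (take j s).
pose Yi j l : int := \sum_(x <- take j s | ~~ piece x) vint x l.
pose Qc q l : R := \sum_(x <- take q (filter piece s)) v x l.
have hdec j l : \sum_(x <- take j s) v x l = (Yi j l)%:~R + Qc (cnt j) l.
  rewrite (bigID piece) /= addrC; congr (_ + _).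
    rewrite /Yi intr_sum; apply: eq_bigr => x hx; exact: hvint.
  by rewrite -big_filter filter_take.
pose cp := count piece s.
pose W := (2 * k * Δ).+1.
pose a q l : int := Num.ceil (- (k%:R * D) - Qc q l).
have hcnt (j : 'I_(size s).+1) : (cnt j < cp.+1)%N by rewrite ltnS count_take_le.
have hY j l : 0 <= Yi j l - a (cnt j) l /\ (`|Yi j l - a (cnt j) l|%N < W)%N.
  have := hs j l; rewrite hdec ler_norml => /andP [h1 h2].
  have ha1 : a (cnt j) l <= Yi j l.
    by rewrite /a ceil_le_int; lra.
  have /andP [_ ha2] := ceil_itv (- (k%:R * D) - Qc (cnt j) l).
  rewrite -/(a (cnt j) l) in ha2.
  have hlt : (Yi j l - a (cnt j) l)%:~R < (W%:R : R).
    rewrite intrB /W -addn1 natrD !natrM -/D; lra.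
  split; first by rewrite subr_ge0.
  have := gez0_abs (eqbRL (subr_ge0 _ _) ha1).
  move: hlt; case: (Yi j l - a (cnt j) l) => [m|m] /=; last by [].
  by rewrite -[W%:R]/((Posz W)%:~R) ltr_int ltz_nat.
pose f (j : 'I_(size s).+1) : ('I_cp.+1 * {ffun 'I_k -> 'I_W})%type :=
  (inord (cnt j), [ffun l => inord `|Yi j l - a (cnt j) l|%N]).
have hsA : #|A| = size s.
  by rewrite -(card_uniqP us); apply: eq_card => x; rewrite ms.
case: (boolP (injectiveb f)) => [/injectiveP finj | /injectivePn [j1 [j2 hne hfe]]].
  right.
  have := leq_card f finj; rewrite card_prod card_ffun !card_ord => hcard.
  have hcp : (cp <= cn + #|Fr|)%N.
    have e1 : cp = #|[pred x in filter piece s]|.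
      by rewrite (card_uniqP (filter_uniq _ us)) size_filter.
    rewrite e1; apply: (@leq_trans #|[pred x | piece x]|).
      by apply: subset_leq_card; apply/subsetP => x; rewrite !inE mem_filter => /andP [].
    rewrite -[#|[pred x | piece x]|]sum1_card big_sumType /= !sum1_card card_ord addnC.
    by apply: leq_add => //; apply: subset_leq_card; apply/subsetP => x; rewrite !inE.
  have hA1 : (\sum_(i < n) (inl i \in A : nat) <= #|A|)%N.
    rewrite -sum1_card big_mkcond big_sumType /=; apply: leq_trans (leq_addr _ _) .
    by rewrite [X in (_ <= X)%N]big_mkcond; apply: leq_sum => i _; case: (inl i \in A).
  have hnorm : vnorm_1 (xstar - map_mx intr z) <= #|A|%:R.
    apply: (@le_trans _ _ (\sum_(i < n) ((inl i \in A : nat)%:R : R))); last first.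
      by rewrite -natr_sum ler_nat.
    rewrite /vnorm_1; apply: ler_sum => i _; rewrite !mxE.
    have := hz01 i; have := hx01 i; move=> /andP [h1 h2] /andP [h3 h4].
    case hi: (inl i \in A); rewrite /= ?mulr1n ?mulr0n.
      rewrite ler_norml; apply/andP; split; lra.
    move: hi; rewrite inE => /negbT; rewrite negb_or negbK => /andP [hF /eqP e].
    by rewrite (xr_eq (hx01 i) hF) e subrr normr0.
  apply: le_trans hnorm _; rewrite ler_nat hsA.
  apply: leq_trans (leqnSn _) _; apply: leq_trans hcard _; rewrite /W addn1.
  by apply: leq_mul => //; rewrite ltnS.
left.
have [hc hy] : cnt j1 = cnt j2 /\ forall l, Yi j1 l = Yi j2 l.
  move: hfe => [e1 /ffunP e2].
  have ec : cnt j1 = cnt j2.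
    by move: (congr1 val e1); rewrite /= !inordK ?hcnt.
  split=> // l; move: (congr1 val (e2 l)); rewrite !ffunE /= !inordK; try exact: (proj2 (hY _ l)).
  rewrite -ec => e.
  have := gez0_abs (proj1 (hY j1 l)); have := gez0_abs (proj1 (hY j2 l)).
  rewrite -ec -e => -> /(congr1 (fun x => x + a (cnt j1) l)).
  by rewrite !subrK.
suff key : forall j1 j2 : 'I_(size s).+1, (j1 < j2)%N -> cnt j1 = cnt j2 ->
    (forall l, Yi j1 l = Yi j2 l) ->
    exists2 z' : 'cV[int]_n, is_binary z' /\ H *m z' = b & Tset xstar z' \proper Tset xstar z.
  case: (ltngtP j1 j2) => hj.
  - exact: (key j1 j2 hj hc hy).
  - by apply: (key j2 j1 hj) => // l; rewrite hy.
  - by move: hne; rewrite (val_inj hj) eqxx.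
clear hc hy hne hfe j1 j2; move=> j1 j2 hj hc hy.
pose blk := drop j1 (take j2 s).
have hj2 : (j2 <= size s)%N by rewrite -ltnS ltn_ord.
have htake : take j2 s = take j1 s ++ blk.
  by rewrite -{1}(cat_take_drop j1 (take j2 s)) take_takel // ltnW.
have hcb : count piece blk = 0%N.
  by move: hc; rewrite /cnt htake count_cat => /eqP; rewrite -{1}[count _ (take j1 s)]addn0 eqn_add2l => /eqP <-.
have hnp : all (fun x => ~~ piece x) blk.
  by apply/allP => x hx; apply/negP => hp; move/eqP: hcb; rewrite -leqn0 leqNgt -has_count; apply/negP; apply/negPn/hasP; exists x.
have hblk0 l : \sum_(x <- blk) vint x l = 0.
  have e : \sum_(x <- blk | ~~ piece x) vint x l = 0.
    have := hy l; rewrite /Yi htake big_cat /= => e.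
    by apply: (addrI (\sum_(x <- take j1 s | ~~ piece x) vint x l)); rewrite addr0 -e.
  rewrite -[RHS]e [RHS]big_seq_cond [LHS]big_seq_cond; apply: eq_bigl => x.
  by case hx: (x \in blk) => //=; rewrite (allP hnp x hx).
have hsz : (0 < size blk)%N by rewrite size_drop size_takel // subn_gt0.
have ublk : uniq blk by apply: drop_uniq; apply: take_uniq.
have blks x : x \in blk -> x \in A by move=> /mem_drop /mem_take; rewrite ms.
pose z' : 'cV[int]_n := \col_i (if inl i \in blk then xr xstar i else z i 0).
have [x0 hx0] : exists x, x \in blk.
  by case E: blk hsz => [|x t] // _; exists x; rewrite mem_head.
have hx0np : ~~ piece x0 := allP hnp x0 hx0.
case: x0 hx0 hx0np => [i0|j0] hx0 //= hi0F.
exists z'.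
  split.
    move=> i; rewrite mxE; case: ifP => _; last exact: hz.
    by rewrite /xr; case: ifP => _; [right|left].
  apply/matrixP => l j; rewrite ord1 -hzb !mxE; apply/eqP; rewrite -subr_eq0 -sumrB.
  have := hblk0 l; rewrite big_uniq //= big_sumType /=.
  rewrite [X in _ + X]big1 ?addr0 // => e.
  apply/eqP; apply: (@etrans _ _ (- \sum_(i < n) (if inl i \in blk then (z i 0 - xr xstar i) * H l i else 0))); last by rewrite -big_mkcond /= e oppr0.
  rewrite -sumrN; apply: eq_bigr => i _; rewrite mxE; case: ifP => _; last by rewrite subrr oppr0.
  by rewrite -mulrBr -mulNr opprB mulrC.
apply/properP; split.
  apply/subsetP => i; rewrite !inE mxE => /andP [-> /=].
  by case: ifP => //; rewrite eqxx.
exists i0.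
  rewrite inE hi0F /=; have := blks _ hx0; rewrite inE /= (negbTE hi0F) //.
by rewrite inE mxE hx0 eqxx andbF.
Qed.

Theorem mainTheorem2 (R : archiRealFieldType) (k n : nat)
  (H : 'M[int]_(k, n)) (bstar : 'cV[R]_k) (b : 'cV[int]_k) (phi : nat)
  (xstar : 'cV[R]_n)
  (hx01 : forall i, 0 <= xstar i 0 <= 1)
  (hHx : map_mx intr H *m xstar = bstar)
  (hfrac : (#|[set i | (xstar i ord0 != 0%R) && (xstar i ord0 != 1%R)]| <= phi)%N)
  (hsol : exists z : 'cV[int]_n, is_binary z /\ H *m z = b) :
  exists zh : 'cV[int]_n, is_binary zh /\ H *m zh = b /\
    vnorm_1 (xstar - map_mx intr zh) <=
      ((Num.ceil (vnorm_inf (bstar - map_mx intr b) / (mx_entry_max H)%:R))%:~R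
        + phi%:R + 1)
      * ((2 * k * mx_entry_max H + 1)%:R) ^+ k.
Proof.
set Δ := mx_entry_max H.
set M := vnorm_inf (bstar - map_mx intr b).
set c := Num.ceil (M / Δ%:R).
have hM l : `|bstar l 0 - (b l 0)%:~R| <= M.
  have := @le_bigmax _ _ _ 0 (fun i : 'I_k => `|(bstar - map_mx intr b) i 0|) l.
  by rewrite !mxE.
have hM0 : 0 <= M.
  rewrite /M /vnorm_inf; elim/big_ind: _ => //.
  by move=> x y hx hy; rewrite le_max hx.
have hc0 : 0 <= c by rewrite ceil_ge0; apply: lt_le_trans (divr_ge0 hM0 (ler0n _ _)); rewrite oppr_lt0.
pose cn := `|c|%N.
have hc : c = cn%:Z by rewrite /cn gez0_abs.
have hcn l : `|bstar l 0 - (b l 0)%:~R| <= cn%:R * Δ%:R.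
  case: (posnP Δ) => hD.
    have hH0 l' i : H l' i = 0.
      by apply/eqP; rewrite -absz_eq0 -leqn0 -hD entry_bound.
    have [z [_ hzb]] := hsol.
    rewrite -hzb -hHx !mxE !big1 ?subrr ?normr0 ?hD ?mulr0 // => i _; rewrite ?mxE hH0 ?mul0r //.
  have := ceil_itv (M / Δ%:R); rewrite -/c hc => /andP [_ h].
  rewrite -[(Posz cn)%:~R]/(cn%:R) ler_pdivrMr ?ltr0n // in h.
  exact: le_trans (hM l) h.
have main : forall t z, is_binary z -> H *m z = b -> (#|Tset xstar z| <= t)%N ->
  exists zh : 'cV[int]_n, is_binary zh /\ H *m zh = b /\
    vnorm_1 (xstar - map_mx intr zh) <=
      (c%:~R + phi%:R + 1) * ((2 * k * Δ + 1)%:R) ^+ k.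
  elim=> [|t IH] z hz hzb ht; case: (step hx01 hHx hcn hz hzb) => [[z' [hz' hz'b] hpr] | hb].
  - by have := proper_card hpr; rewrite ltnNge (leq_trans ht (leq0n _)).
  - exists z; split=> //; split=> //; apply: le_trans hb _.
    rewrite natrM natrX; apply: ler_wpM2r; first by apply: exprn_ge0.
    rewrite hc -[(Posz cn)%:~R]/(cn%:R : R) -addn1 !natrD lerD2r lerD2l ler_nat.
    exact: hfrac.
  - apply: (IH z') => //; rewrite -ltnS; exact: leq_trans (proper_card hpr) ht.
  - exists z; split=> //; split=> //; apply: le_trans hb _.
    rewrite natrM natrX; apply: ler_wpM2r; first by apply: exprn_ge0.
    rewrite hc -[(Posz cn)%:~R]/(cn%:R : R) -addn1 !natrD lerD2r lerD2l ler_nat.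
    exact: hfrac.
have [z [hz hzb]] := hsol.
exact: (main _ z hz hzb (leqnn _)).
Qed.
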